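(* For every $\lambda\in\mathscr{P}^n_C$, $[\xi(\lambda)]=\ell(\lambda)\,\alpha_n^\vee$.
   Context: Setting: $W_{\mathrm{af}}$ affine Weyl group of type $C_n^{(1)}$ generated by $s_0,\dots,s_n$; $W=\langle s_1,\dots,s_n\rangle$ acts on $X^\vee=\bigoplus_{i=1}^n\mathbb{Z}\varepsilon_i$ ($s_i$ swaps $\varepsilon_i,\varepsilon_{i+1}$ for $i<n$; $s_n$ negates $\varepsilon_n$). $Q^\vee=\bigoplus_{i=1}^n\mathbb{Z}\alpha_i^\vee$, $\alpha_i^\vee=\varepsilon_i-\varepsilon_{i+1}$ ($i<n$), $\alpha_n^\vee=\varepsilon_n$. $W_{\mathrm{af}}\cong W\ltimes Q^\vee$ (elements $wt_\xi$, $wt_\xi w^{-1}=t_{w\xi}$), with $s_0=s_\theta t_{-\varepsilon_1}$, $s_\theta=s_1\cdots s_{n-1}s_ns_{n-1}\cdots s_1$. For $\xi=\sum_{i=1}^n c_i\alpha_i^\vee\in Q^\vee$ set $[\xi]=c_n\alpha_n^\vee$. $\rho_i=s_{i-1}\cdots s_1s_0$ ($1\le i\le n$), $\rho_i=s_{2n-i+1}\cdots s_{n-1}s_ns_{n-1}\cdots s_1s_0$ ($n+1\le i\le 2n$). $\mathscr{P}^n_C$: partitions $\lambda=(\lambda_1\ge\dots\ge\lambda_l>0)$ with $\lambda_1\le 2n$ and $\lambda_k<n\Rightarrow\lambda_k>\lambda_{k+1}$; $x_\lambda=\rho_{\lambda_l}\cdots\rho_{\lambda_1}$; $v(\lambda)\in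 W$ and $\xi(\lambda)\in Q^\vee$ are defined by $x_\lambda=v(\lambda)t_{-\xi(\lambda)}$; $\ell(\lambda)=l$ is the number of parts. *)

(* Defs.v *)
(* Concrete model of the affine Weyl group of type C_n^(1)
   as the semidirect product W ⋉ Q^∨. *)
From mathcomp Require Import all_boot all_order all_algebra.
Set Implicit Arguments. Unset Strict Implicit. Unset Printing Implicit Defensive.
Import GRing.Theory Num.Theory.
Local Open Scope ring_scope.

(* Vectors of X^∨ = ⊕_{i=1}^n Z ε_i, stored as functions nat -> int
   (only coordinates 1..n are meaningful). *)
Definition vec := nat -> int.

Definition eps (k : nat) : vec := fun j => ((j == k) : nat)%:Z.

Definition act_s (n i : nat) (x : vec) : vec :=
  fun j =>
    if (i < n)%N then
      (if j == i then x i.+1 else if j == i.+1 then x i else x j)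
    else if i == n then (if j == n then - x j else x j)
    else x j.

(* An element of W is represented by a word [:: i1; ...; ik] in s_1..s_n,
   standing for s_{i1} ... s_{ik}; its action on X^∨ : *)
Definition act_word (n : nat) (w : seq nat) (x : vec) : vec :=
  foldr (act_s n) x w.

(* An element w t_ξ of W_af = W ⋉ Q^∨ is the pair (w, ξ). *)
Definition waf := (seq nat * vec)%type.

Definition waf1 : waf := ([::], fun _ => 0).

(* (w t_ξ)(v t_η) = w v t_{v^{-1} ξ + η}, with v^{-1} the reversed word. *)
Definition waf_mul (n : nat) (a b : waf) : waf :=
  (a.1 ++ b.1, fun j => act_word n (rev b.1) a.2 j + b.2 j).

Definition s_theta_word (n : nat) : seq nat := iota 1 n ++ rev (iota 1 n.-1).

(* Affine generators: s_0 = s_θ t_{-ε_1}, s_i = (s_i, 0) for 1 <= i <= n. *)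
Definition gen (n i : nat) : waf :=
  if i == 0%N then (s_theta_word n, fun j => - eps 1 j) else ([:: i], fun _ => 0).

Definition eval_word (n : nat) (u : seq nat) : waf :=
  foldr (fun i acc => waf_mul n (gen n i) acc) waf1 u.

Definition rho_word (n i : nat) : seq nat :=
  if (i <= n)%N then rev (iota 0 i)
  else iota (2 * n - i + 1) (i - n - 1) ++ n :: rev (iota 0 n).
  (* s_{2n-i+1} ... s_{n-1} s_n s_{n-1} ... s_1 s_0 *)

(* P^n_C : partitions (λ_1 >= ... >= λ_l > 0), λ_1 <= 2n,
   and λ_k <= n -> λ_k > λ_{k+1} (parts of size <= n are distinct).
   Partitions are sequences [:: λ_1; ...; λ_l]. *)
Definition in_PC (n : nat) (la : seq nat) : bool :=
  all (fun a => (0 < a <= 2 * n)%N) la &&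
  sorted (fun a b => (b <= a)%N && ((a <= n)%N ==> (b < a)%N)) la.

Definition x_la (n : nat) (la : seq nat) : waf :=
  eval_word n (flatten (map (rho_word n) (rev la))).

(* x_λ = v(λ) t_{-ξ(λ)} *)
Definition v_la (n : nat) (la : seq nat) : seq nat := (x_la n la).1.
Definition xi_la (n : nat) (la : seq nat) : vec := fun j => - (x_la n la).2 j.

Definition coroot (n i : nat) : vec :=
  fun j => if (i < n)%N then eps i j - eps i.+1 j else eps n j.

Definition coroot_comb (n : nat) (c : nat -> int) : vec :=
  fun j => \sum_(1 <= i < n.+1) c i * coroot n i j.

(* Main.v *)
Require Import Defs.
From mathcomp Require Import all_boot all_order all_algebra.
From mathcomp Require Import zify ring.
From Stdlib Require Import FunctionalExtensionality.
Import GRing.Theory Num.Theory.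
Local Open Scope ring_scope.

Lemma act_word_cat n u w v : act_word n (u ++ w) v = act_word n u (act_word n w v).
Proof. by rewrite /act_word foldr_cat. Qed.

Lemma act_s_add n i (x y : vec) :
  act_s n i (fun j => x j + y j) = fun j => act_s n i x j + act_s n i y j.
Proof.
apply: functional_extensionality => j; rewrite /act_s.
by repeat case: ifP => _ //; rewrite opprD.
Qed.

Lemma act_s_opp n i (x : vec) :
  act_s n i (fun j => - x j) = fun j => - act_s n i x j.
Proof.
apply: functional_extensionality => j; rewrite /act_s.
by repeat case: ifP => _ //.
Qed.

Lemma act_s_zero n i : act_s n i (fun _ => 0) = fun _ => 0.
Proof.
apply: functional_extensionality => j; rewrite /act_s.
by repeat case: ifP => _ //; rewrite oppr0.
Qed.

Lemma act_word_add n w (x y : vec) :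
  act_word n w (fun j => x j + y j) = fun j => act_word n w x j + act_word n w y j.
Proof. elim: w => [|i w IH] //=. by rewrite IH act_s_add. Qed.

Lemma act_word_opp n w (x : vec) :
  act_word n w (fun j => - x j) = fun j => - act_word n w x j.
Proof. elim: w => [|i w IH] //=. by rewrite IH act_s_opp. Qed.

Lemma act_word_zero n w : act_word n w (fun _ => 0) = fun _ => 0.
Proof. elim: w => [|i w IH] //=. by rewrite IH act_s_zero. Qed.

Lemma eval_cat1 n u w : (eval_word n (u ++ w)).1 = (eval_word n u).1 ++ (eval_word n w).1.
Proof. elim: u => [|i u IH] //=. by rewrite IH catA. Qed.

Lemma eval_cat2 n u w : (eval_word n (u ++ w)).2 =
  fun j => act_word n (rev (eval_word n w).1) (eval_word n u).2 j + (eval_word n w).2 j.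
Proof.
elim: u => [|i u IH] /=.
  by rewrite act_word_zero; apply: functional_extensionality => j; rewrite add0r.
rewrite eval_cat1 IH rev_cat act_word_cat act_word_add.
by apply: functional_extensionality => j; rewrite addrA.
Qed.

Lemma fin_nz n u : all (fun i => i != 0%N) u -> (eval_word n u).1 = u.
Proof. elim: u => [|i u IH] //= /andP[Hi Hu]. by rewrite IH // /gen (negbTE Hi). Qed.

Lemma T_nz n u : all (fun i => i != 0%N) u -> (eval_word n u).2 = fun _ => 0.
Proof.
elim: u => [|i u IH] //= /andP[Hi Hu]. rewrite IH // /gen (negbTE Hi) /= act_word_zero.
by apply: functional_extensionality => j; rewrite addr0.
Qed.

Lemma fin_R0 n R : all (fun i => i != 0%N) R ->
  (eval_word n (R ++ [:: 0%N])).1 = R ++ s_theta_word n.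
Proof. by move=> H; rewrite eval_cat1 fin_nz //= cats0. Qed.

Lemma T_R0 n R : all (fun i => i != 0%N) R ->
  (eval_word n (R ++ [:: 0%N])).2 = fun j => - eps 1 j.
Proof.
move=> H; rewrite eval_cat2 T_nz // act_word_zero /=.
by apply: functional_extensionality => j; rewrite add0r addr0.
Qed.

Definition rhoR (n a : nat) : seq nat :=
  if (a <= n)%N then rev (iota 1 a.-1)
  else iota (2 * n - a + 1) (a - n - 1) ++ n :: rev (iota 1 n.-1).

Lemma rho_dec n a : (1 <= n)%N -> (1 <= a)%N -> rho_word n a = rhoR n a ++ [:: 0%N].
Proof.
move=> Hn Ha; rewrite /rho_word /rhoR.
case: ifP => _.
  by case: a Ha => // a _ /=; rewrite rev_cons cats1.
by case: n Hn => // n _ /=; rewrite rev_cons -cats1 -catA.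
Qed.

Lemma rhoR_nz n a : (1 <= n)%N -> all (fun i => i != 0%N) (rhoR n a).
Proof.
move=> Hn; rewrite /rhoR; case: ifP => _.
  by rewrite all_rev; apply/allP => x; rewrite mem_iota; lia.
rewrite all_cat /= all_rev; apply/and3P; split.
- by apply/allP => x; rewrite mem_iota; lia.
- lia.
- by apply/allP => x; rewrite mem_iota; lia.
Qed.

Lemma x_la_cons n a la : x_la n (a :: la) =
  eval_word n (flatten (map (rho_word n) (rev la)) ++ rho_word n a).
Proof. by rewrite /x_la rev_cons map_rcons flatten_rcons. Qed.

Definition G n a v := act_word n (rev (rhoR n a ++ s_theta_word n)) v.

Lemma xi_cons n a la : (1 <= n)%N -> (1 <= a)%N ->
  xi_la n (a :: la) = fun j => G n a (xi_la n la) j + eps 1 j.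
Proof.
move=> Hn Ha; apply: functional_extensionality => j.
rewrite /xi_la x_la_cons eval_cat2 rho_dec // fin_R0 ?rhoR_nz // T_R0 ?rhoR_nz //.
by rewrite /G act_word_opp opprD opprK /x_la.
Qed.

Lemma xi_nil n : xi_la n [::] = fun _ => 0.
Proof. by apply: functional_extensionality => j; rewrite /xi_la /= oppr0. Qed.

Lemma P_form n m k v : (1 <= m)%N -> (m + k <= n)%N ->
  act_word n (iota m k) v = fun j => if j == m then v (m + k)%N
     else if (m < j <= m + k)%N then v j.-1 else v j.
Proof.
elim: k m => [|k IH] m Hm Hmk /=.
  apply: functional_extensionality => j; rewrite addn0.
  case: eqP => [->|_] //; case: ifP => //; lia.
rewrite IH; [|lia|lia]; apply: functional_extensionality => j.
rewrite /act_s (_ : (m < n)%N = true); last by lia.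
do ![case: ifPn => ?]; try (by congr (v _); lia); try (exfalso; lia); by [].
Qed.

Lemma Q_form n m k v : (1 <= m)%N -> (m + k <= n)%N ->
  act_word n (rev (iota m k)) v = fun j => if (m <= j < m + k)%N then v j.+1
     else if j == (m + k)%N then v m else v j.
Proof.
elim: k => [|k IH] Hm Hmk.
  apply: functional_extensionality => j; rewrite addn0 /=.
  case: ifP; [lia|]; by case: eqP => [->|_].
have -> : iota m k.+1 = iota m k ++ [:: (m + k)%N] by rewrite -addn1 iotaD.
rewrite rev_cat /= IH; [|lia|lia]; apply: functional_extensionality => j.
rewrite /act_s (_ : (m + k < n)%N = true); last by lia.
do ![case: ifPn => ?]; try (by congr (v _); lia); try (exfalso; lia); by [].
Qed.

Lemma iota_rc m k : iota m k.+1 = iota m k ++ [:: (m + k)%N].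
Proof. by rewrite -addn1 iotaD. Qed.

Lemma theta_dec n : (1 <= n)%N ->
  s_theta_word n = iota 1 n.-1 ++ n :: rev (iota 1 n.-1).
Proof.
case: n => // n _; rewrite /s_theta_word succnK iota_rc -catA add1n //.
Qed.

Lemma rev_theta n : (1 <= n)%N -> rev (s_theta_word n) = s_theta_word n.
Proof.
move=> Hn; rewrite theta_dec // rev_cat rev_cons revK -cats1 -catA //.
Qed.

Lemma theta_form n v : (1 <= n)%N ->
  act_word n (s_theta_word n) v = fun j => if j == 1%N then - v 1%N else v j.
Proof.
move=> Hn; rewrite theta_dec // act_word_cat /= Q_form; [|lia|lia].
rewrite P_form; [|lia|lia].
apply: functional_extensionality => j.
rewrite /act_s ltnn eqxx.
do ![case: ifPn => ?]; try (by congr (v _); lia); try (by congr (- v _); lia);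
  try (exfalso; lia); by [].
Qed.

Definition Ssum n (v : vec) : int := \sum_(1 <= j < n.+1) v j.

Lemma sum_ind n i (c : int) : (1 <= i <= n)%N ->
  \sum_(1 <= j < n.+1) (if j == i then c else 0) = c.
Proof. move=> H; rewrite -big_mkcond big_nat1_eq; case: ifP => //; lia. Qed.

Lemma S_act_s n i v : (1 <= i < n)%N -> Ssum n (act_s n i v) = Ssum n v.
Proof.
move=> H; rewrite /Ssum.
rewrite (eq_bigr (fun j => v j + ((if j == i then v i.+1 - v i else 0)
   + (if j == i.+1 then - (v i.+1 - v i) else 0)))); last first.
  move=> j _; rewrite /act_s (_ : (i < n)%N = true); last by lia.
  case: eqVneq => [->|Hji].
    by rewrite (_ : (i == i.+1) = false); [ring|lia].
  case: eqVneq => [->|Hj2]; first by ring.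
  by rewrite !addr0.
rewrite big_split big_split /= !sum_ind; [|lia|lia]. by rewrite subrr addr0.
Qed.

Lemma S_act_n n v : (1 <= n)%N -> Ssum n (act_s n n v) = Ssum n v - v n *+ 2.
Proof.
move=> H; rewrite /Ssum.
rewrite (eq_bigr (fun j => v j + (if j == n then - (v n *+ 2) else 0))); last first.
  move=> j _; rewrite /act_s ltnn eqxx.
  case: eqVneq => [->|Hj]; first by ring.
  by rewrite addr0.
rewrite big_split /= sum_ind //; lia.
Qed.

Lemma S_chain n w v : all (fun i => (1 <= i < n)%N) w -> Ssum n (act_word n w v) = Ssum n v.
Proof.
elim: w => [|i w IH] //= /andP[Hi Hw]. by rewrite S_act_s // IH.
Qed.

Lemma S_theta n v : (1 <= n)%N ->
  Ssum n (act_word n (s_theta_word n) v) = Ssum n v - v 1%N *+ 2.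
Proof.
move=> H; rewrite theta_form // /Ssum.
rewrite (eq_bigr (fun j => v j + (if j == 1%N then - (v 1%N *+ 2) else 0))); last first.
  move=> j _; case: eqVneq => [->|Hj]; first by ring.
  by rewrite addr0.
rewrite big_split /= sum_ind //; lia.
Qed.

Lemma eps_if k j : eps k j = if j == k then 1 else 0.
Proof. by rewrite /eps; case: eqP. Qed.

Lemma sum_ind' n k (d : int) :
  \sum_(1 <= j < n.+1) (if j == k then d else 0) = if (1 <= k < n.+1)%N then d else 0.
Proof. by rewrite -big_mkcond big_nat1_eq. Qed.

Lemma G_big n a v : (1 <= n)%N -> (n < a <= 2 * n)%N -> Ssum n (G n a v) = Ssum n v.
Proof.
move=> Hn Ha; rewrite /G /rhoR (_ : (a <= n)%N = false); last by lia.
rewrite rev_cat rev_theta // rev_cat rev_cons revK -cats1 act_word_cat.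
rewrite S_theta // !act_word_cat S_chain; last by apply/allP => x; rewrite mem_iota; lia.
rewrite P_form; [|lia|lia]; rewrite eqxx (_ : (1 + n.-1)%N = n); last by lia.
rewrite S_act_n // S_chain; last by rewrite all_rev; apply/allP => x; rewrite mem_iota; lia.
rewrite {2}/act_word /= /act_s ltnn eqxx mulNrn; ring.
Qed.

Lemma G_small n a v : (1 <= n)%N -> (1 <= a <= n)%N ->
  G n a v = fun j => if j == 1%N then - v a else if (1 < j <= a)%N then v j.-1 else v j.
Proof.
move=> Hn Ha; rewrite /G /rhoR (_ : (a <= n)%N = true); last by lia.
rewrite rev_cat rev_theta // revK act_word_cat theta_form //.
rewrite P_form; [|lia|lia]; apply: functional_extensionality => j.
rewrite eqxx (_ : (1 + a.-1)%N = a); last by lia.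
by case: eqVneq.
Qed.

Definition ind (l j : nat) : int := if (1 <= j <= l)%N then 1 else 0.

Definition rel_PC (n : nat) := (fun a b => (b <= a)%N && ((a <= n)%N ==> (b < a)%N)).

Lemma in_PC_cons n a t : in_PC n (a :: t) ->
  [/\ in_PC n t, (0 < a <= 2 * n)%N & path (rel_PC n) a t].
Proof.
rewrite /in_PC /= => /andP[/andP[Ha Hall] Hs]; split => //.
by rewrite Hall (path_sorted Hs).
Qed.

Lemma small_inv n la : (1 <= n)%N -> in_PC n la -> all (fun x => x <= n)%N la ->
  (size la <= head 0 la)%N /\ xi_la n la = fun j => ind (size la) j.
Proof.
move=> Hn; elim: la => [|a t IH].
  move=> _ _; split => //; rewrite xi_nil; apply: functional_extensionality => j.
  by rewrite /ind (_ : (1 <= j <= 0)%N = false) //; lia.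
move=> /in_PC_cons [Ht Ha Hp] /= /andP[Han Hall].
have [IH1 IH2] := IH Ht Hall.
have Hlt : (size t < a)%N.
  case: t Ht Hp IH1 {IH2 Hall IH} => [|b t] _ Hp Hb; first by simpl; lia.
  move: Hp => /= /andP[Hr _]; move: Hr Hb; rewrite /rel_PC Han /=; lia.
split; first by lia.
rewrite xi_cons //; last by lia.
rewrite G_small; last by lia. 2: by [].
apply: functional_extensionality => j; rewrite IH2 eps_if /ind.
do ![case: ifPn => ?]; try (exfalso; lia); by rewrite ?oppr0 ?add0r ?addr0.
Qed.

Lemma sumB n (F G : nat -> int) : \sum_(1 <= j < n.+1) (F j - G j) =
  \sum_(1 <= j < n.+1) F j - \sum_(1 <= j < n.+1) G j.
Proof. by rewrite big_split sumrN. Qed.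

Lemma sum_indF n k (F : nat -> int) :
  \sum_(1 <= j < n.+1) (if j == k then F j else 0) = if (1 <= k < n.+1)%N then F k else 0.
Proof. by rewrite -big_mkcond big_nat1_eq. Qed.

Lemma S_ind n l : (l <= n)%N -> Ssum n (fun j => ind l j) = l%:Z.
Proof.
move=> H; rewrite /Ssum (big_cat_nat (n := l.+1)) /=; [|lia|lia].
rewrite (eq_big_nat _ _ (F2 := fun _ => 1)); last by move=> i Hi; rewrite /ind; case: ifP => //; lia.
rewrite [X in _ + X](eq_big_nat _ _ (F2 := fun _ => 0)); last by move=> i Hi; rewrite /ind; case: ifP => //; lia.
by rewrite !sumr_const_nat mul0rn addr0 subn1 /= natz.
Qed.

Lemma S_xi n la : (1 <= n)%N -> in_PC n la -> Ssum n (xi_la n la) = (size la)%:Z.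
Proof.
move=> Hn; elim: la => [|a t IH] H.
  by rewrite xi_nil /Ssum big1.
have H' := H; case/in_PC_cons: H => Ht Ha Hp.
case: (leqP a n) => Han.
  have Hall : all (fun x => x <= n)%N (a :: t).
    have Hg : path (fun x y => (y <= x)%N) a t.
      by apply: sub_path Hp => x y /andP[].
    have := order_path_min _ Hg.
    have Htr : transitive (fun x y : nat => (y <= x)%N) by move=> x y z; lia.
    move=> /(_ Htr) /allP Hm; rewrite /= Han /=; apply/allP => x /Hm; lia.
  have [H1 H2] := small_inv _ _ Hn H' Hall.
  by rewrite H2 S_ind //; move: H1 => /=; lia.
rewrite xi_cons //; last by lia.
have Hs : forall u w : vec, Ssum n (fun j => u j + w j) = Ssum n u + Ssum n w.
  by move=> u w; rewrite /Ssum big_split.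
have He : Ssum n (eps 1) = 1.
  rewrite /Ssum (eq_bigr (fun j => if j == 1%N then 1 else 0)); last by move=> j _; rewrite eps_if.
  by rewrite sum_ind'; case: ifP => //; lia.
rewrite Hs He G_big //; last by lia.
rewrite IH //= ; lia.
Qed.

Theorem proposition3p3 (n : nat) (la : seq nat) :
  (1 <= n)%N -> in_PC n la ->
  (exists c : nat -> int,
     forall j, (1 <= j <= n)%N -> xi_la n la j = coroot_comb n c j) /\
  (forall c : nat -> int,
     (forall j, (1 <= j <= n)%N -> xi_la n la j = coroot_comb n c j) ->
     c n = (size la)%:Z).
Proof.
move=> Hn Hla; split.
  pose c := fun i => \sum_(1 <= k < i.+1) xi_la n la k.
  exists c => j Hj; rewrite /coroot_comb.
  rewrite (eq_big_nat _ _ (F2 := fun i => (if i == j then c i else 0)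
            - (if i == j.-1 then c i else 0))); last first.
    move=> i Hi; rewrite /coroot !eps_if.
    do ![case: ifPn => ?]; try (exfalso; lia); ring.
  rewrite sumB /= !sum_indF.
  case: j Hj => [|j] Hj; first by lia.
  rewrite (_ : (1 <= j.+1 < n.+1)%N = true); last by lia.
  rewrite /c big_nat_recr /=; last by lia.
  case: ifP => Hj1.
    by rewrite addrAC subrr add0r.
  rewrite (_ : j = 0%N); last by lia.
  by rewrite big_geq // add0r subr0.
move=> c Hc.
rewrite -(S_xi n la) // /Ssum (eq_big_nat _ _ (F2 := fun j => coroot_comb n c j)); last first.
  move=> j Hj; apply: Hc; lia.
rewrite /coroot_comb exchange_big_nat /=.
rewrite (eq_big_nat _ _ (F2 := fun i => if i == n then c i else 0)); last first.
  move=> i Hi.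
  rewrite (eq_bigr (fun j => (if j == i then c i else 0)
     - (if j == i.+1 then (if (i < n)%N then c i else 0) else 0))); last first.
    move=> j _; rewrite /coroot !eps_if.
    do ![case: ifPn => ?]; try (exfalso; lia); ring.
  rewrite sumB /= !sum_ind'.
  do ![case: ifPn => ?]; try (exfalso; lia); ring.
by rewrite sum_indF; case: ifP => //; lia.
Qed.
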